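(* Let $\mathbb{F}$ be an algebraically closed field, $\mathbf{O}$ the split octonion algebra over $\mathbb{F}$, and $T_n\subseteq \mathbb{F}[\mathbf{O}^n]$ the algebra of trace ${\rm G}_2$-invariants. Let $w$ be a (non-associative) word in the letters $x_1,\ldots,x_n$ and write $\mathrm{tr}(w)$ for the function $\underline{a}\mapsto \mathrm{tr}(w(a_1,\ldots,a_n))$ on $\mathbf{O}^n$. For $1\le i_1,\ldots,i_k\le n$ write $\mathrm{tr}(i_1,\ldots,i_k)$ for the function $\underline{a}\mapsto\mathrm{tr}((\cdots((a_{i_1}a_{i_2})a_{i_3})\cdots)a_{i_k})$. Then: 1. If $w$ is not multilinear and $\deg(w)>2$, then $\mathrm{tr}(w)\equiv 0$ in $T_n$. 2. If $w$ is multilinear and is a product of the letters $x_{i_1},\ldots,x_{i_k}$ with $1\le i_1<\cdots<i_k\le n$, then $\mathrm{tr}(w)\equiv \pm\,\mathrm{tr}(i_1,\ldots,i_k)$ in $T_n$. 3. For all $1\le i_1<\cdots<i_k\le n$ with $k\ge 3$ and every permutation $\sigma\in\mathcal{S}_k$, $\mathrm{tr}(i_{\sigma(1)},\ldots,i_{\sigma(k)})\equiv (-1)^{\sigma}\,\mathrm{tr}(i_1,\ldots,i_k)$ in $T_n$.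
   Context: The split octonion algebra $\mathbf{O}$ is the 8-dimensional $\mathbb{F}$-vector space of formal matrices $a=\begin{pmatrix}\alpha&\mathbf{u}\\ \mathbf{v}&\beta\end{pmatrix}$ with $\alpha,\beta\in\mathbb{F}$, $\mathbf{u},\mathbf{v}\in\mathbb{F}^3$, with multiplication $\begin{pmatrix}\alpha&\mathbf{u}\\ \mathbf{v}&\beta\end{pmatrix}\begin{pmatrix}\alpha'&\mathbf{u}'\\ \mathbf{v}'&\beta'\end{pmatrix}=\begin{pmatrix}\alpha\alpha'+\mathbf{u}\cdot\mathbf{v}'&\alpha\mathbf{u}'+\beta'\mathbf{u}-\mathbf{v}\times\mathbf{v}'\\ \alpha'\mathbf{v}+\beta\mathbf{v}'+\mathbf{u}\times\mathbf{u}'&\beta\beta'+\mathbf{v}\cdot\mathbf{u}'\end{pmatrix}$ (dot product and cross product on $\mathbb{F}^3$). Trace $\mathrm{tr}(a)=\alpha+\beta$, norm $n(a)=\alpha\beta-\mathbf{u}\cdot\mathbf{v}$. ${\rm G}_2=\mathrm{Aut}(\mathbf{O})$. The algebra $T_n$ of trace ${\rm G}_2$-invariants is the subalgebra of the polynomial ring $\mathbb{F}[\mathbf{O}^n]$ generated by the functions $\underline{a}\mapsto n(a_i)$ ($1\le i\le n$) and $\underline{a}\mapsto\mathrm{tr}(w(a_1,\ldots,a_n))$ for all non-empty non-associative words $w$ in $x_1,\ldots,x_n$. $T_n$ is graded by total degree (the function $\mathrm{tr}(w)$ has degree the number of letters of $w$, $n(a_i)$ has degree 2); $T_n^+$ denotes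 the span of homogeneous elements of positive degree, and $f\equiv h$ in $T_n$ means $f-h\in (T_n^+)^2$. A word is multilinear if each letter occurs in it at most once. *)

(* Defs.v *)
From HB Require Import structures.
From mathcomp Require Import all_boot all_order all_algebra all_fingroup.
From mathcomp Require Import mpoly.
Set Implicit Arguments. Unset Strict Implicit. Unset Printing Implicit Defensive.
Import GRing.Theory.
Local Open Scope ring_scope.

Record vec3 (R : Type) := V3 { c1 : R; c2 : R; c3 : R }.
Record oct (R : Type) := Oct { oal : R; ou : vec3 R; ov : vec3 R; obe : R }.

Section Octonions.
Variable R : comRingType.
Definition dot3 (x y : vec3 R) : R := c1 x * c1 y + c2 x * c2 y + c3 x * c3 y.
Definition cross3 (x y : vec3 R) : vec3 R :=
  V3 (c2 x * c3 y - c3 x * c2 y) (c3 x * c1 y - c1 x * c3 y) (c1 x * c2 y - c2 x * c1 y).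
Definition add3 (x y : vec3 R) : vec3 R := V3 (c1 x + c1 y) (c2 x + c2 y) (c3 x + c3 y).
Definition scale3 (a : R) (x : vec3 R) : vec3 R := V3 (a * c1 x) (a * c2 x) (a * c3 x).
Definition opp3 (x : vec3 R) : vec3 R := V3 (- c1 x) (- c2 x) (- c3 x).

(* (α u; v β)(α' u'; v' β') =
   (αα' + u·v' ; αu' + β'u − v×v' ; α'v + βv' + u×u' ; ββ' + v·u') *)
Definition omul (a b : oct R) : oct R :=
  Oct (oal a * oal b + dot3 (ou a) (ov b))
      (add3 (add3 (scale3 (oal a) (ou b)) (scale3 (obe b) (ou a))) (opp3 (cross3 (ov a) (ov b))))
      (add3 (add3 (scale3 (oal b) (ov a)) (scale3 (obe a) (ov b))) (cross3 (ou a) (ou b)))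
      (obe a * obe b + dot3 (ov a) (ou b)).
Definition otr (a : oct R) : R := oal a + obe a.
Definition onorm (a : oct R) : R := oal a * obe a - dot3 (ou a) (ov a).
End Octonions.

Inductive word (n : nat) : Type :=
| Letter of 'I_n
| Mul of word n & word n.

Fixpoint letters n (w : word n) : seq 'I_n :=
  match w with Letter i => [:: i] | Mul u v => letters u ++ letters v end.
Definition wdeg n (w : word n) : nat := size (letters w).
Definition multilinear n (w : word n) : bool := uniq (letters w).

Fixpoint weval (R : comRingType) n (a : 'I_n -> oct R) (w : word n) : oct R :=
  match w with Letter i => a i | Mul u v => omul (weval a u) (weval a v) end.

Definition leftword n (x : 'I_n) (r : seq 'I_n) : word n :=
  foldl (fun w j => Mul w (Letter j)) (Letter x) r.

Section PolyFunctions.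
Variable F : fieldType.
Variable n : nat.
Notation P := {mpoly F[n * 8]}.

Definition crd (i : 'I_n) (j : 'I_8) : P := 'X_(mxvec_index i j).
(* the generic octonion: the i-th coordinate function O^n -> O *)
Definition gen (i : 'I_n) : oct P :=
  Oct (crd i 0) (V3 (crd i 1) (crd i 2) (crd i 3))
      (V3 (crd i 4) (crd i 5) (crd i 6)) (crd i 7).

Definition trw (w : word n) : P := otr (weval gen w).
Definition nrm (i : 'I_n) : P := onorm (gen i).
Definition trL (s : seq 'I_n) : P :=
  if s is x :: r then trw (leftword x r) else 0.

Inductive inT : P -> Prop :=
| inT_nrm i : inT (nrm i)
| inT_tr w : inT (trw w)
| inT_C c : inT c%:MP
| inT_add p q : inT p -> inT q -> inT (p + q)
| inT_mul p q : inT p -> inT q -> inT (p * q).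

Inductive inTplus : P -> Prop :=
| Tp_hom p d : inT p -> (0 < d)%N -> p \is d.-homog -> inTplus p
| Tp_0 : inTplus 0
| Tp_add p q : inTplus p -> inTplus q -> inTplus (p + q)
| Tp_scale c p : inTplus p -> inTplus (c *: p).

Inductive inTplus2 : P -> Prop :=
| Tp2_mul f g : inTplus f -> inTplus g -> inTplus2 (f * g)
| Tp2_0 : inTplus2 0
| Tp2_add p q : inTplus2 p -> inTplus2 q -> inTplus2 (p + q)
| Tp2_scale c p : inTplus2 p -> inTplus2 (c *: p).

(* f ≡ h in T_n  iff  f - h ∈ (T_n^+)^2 *)
Definition equivT (f h : P) : Prop := inTplus2 (f - h).
End PolyFunctions.

(* Main.v *)
Require Import Defs.
From HB Require Import structures.
From mathcomp Require Import all_boot all_order all_algebra all_fingroup.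
From mathcomp Require Import mpoly.
From mathcomp Require Import ring zify.
Import GRing.Theory.
Local Open Scope ring_scope.
Set Implicit Arguments. Unset Strict Implicit.

Section O.
Variable R : comRingType.
Definition oadd (X Y : oct R) : oct R :=
  Oct (oal X + oal Y) (add3 (ou X) (ou Y)) (add3 (ov X) (ov Y)) (obe X + obe Y).
Definition osc (t : R) (X : oct R) : oct R :=
  Oct (t * oal X) (scale3 t (ou X)) (scale3 t (ov X)) (t * obe X).
Definition oone : oct R := Oct 1 (V3 0 0 0) (V3 0 0 0) 1.
Definition ozero : oct R := Oct 0 (V3 0 0 0) (V3 0 0 0) 0.

Definition odiff (X Y : oct R) : oct R := oadd X (osc (-1) Y).
Lemma oct_ext (X Y : oct R) : oal X = oal Y ->
  c1 (ou X) = c1 (ou Y) -> c2 (ou X) = c2 (ou Y) -> c3 (ou X) = c3 (ou Y) ->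
  c1 (ov X) = c1 (ov Y) -> c2 (ov X) = c2 (ov Y) -> c3 (ov X) = c3 (ov Y) ->
  obe X = obe Y -> X = Y.
Proof.
by case: X => a [u1 u2 u3] [v1 v2 v3] b; case: Y => a' [u1' u2' u3'] [v1' v2' v3'] b' /= -> -> -> -> -> -> -> ->.
Qed.

End O.
Arguments oone {R}.
Arguments ozero {R}.
Ltac ounf := cbv [odiff oadd osc omul oone ozero otr onorm dot3 cross3 add3 scale3 opp3 oal ou ov obe c1 c2 c3].
Ltac oring := apply: oct_ext; ounf; ring.

Section O2.
Variable R : comRingType.
Implicit Types X Y Z A B C D U V : oct R.
Lemma I1 X Y : oadd (omul X Y) (omul Y X) =
  oadd (oadd (osc (otr X) Y) (osc (otr Y) X)) (osc (otr (omul X Y) - otr X * otr Y) oone).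
Proof. oring. Qed.
Lemma Iassoc X Y Z : oadd (omul X (omul Y Z)) (omul (omul X Y) Z) =
  oadd (oadd (omul X (omul Y Z)) (omul (omul Y Z) X))
  (oadd (osc (-1) (omul (oadd (omul Y Z) (omul Z Y)) X))
  (oadd (omul Z (oadd (omul Y X) (omul X Y)))
  (oadd (osc (-1) (omul (oadd (omul Z X) (omul X Z)) Y))
   (omul X (oadd (omul Z Y) (omul Y Z)))))).
Proof. oring. Qed.
Lemma Iswap X Y Z : oadd (omul (omul X Y) Z) (omul (omul X Z) Y) = omul X (oadd (omul Y Z) (omul Z Y)).
Proof. oring. Qed.
Lemma Iswap0 X Y Z : oadd (omul (omul X Y) Z) (omul (omul Y X) Z) = omul (oadd (omul X Y) (omul Y X)) Z.
Proof. oring. Qed.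
Lemma Idup X Y : omul (omul X X) Y = oadd (osc (otr X) (omul X Y)) (osc (- onorm X) Y).
Proof. oring. Qed.
Lemma Ttr_assoc X Y Z : otr (omul (omul X Y) Z) = otr (omul X (omul Y Z)).
Proof. ounf; ring. Qed.
Lemma Ttr_comm X Y : otr (omul X Y) = otr (omul Y X).
Proof. ounf; ring. Qed.
Lemma omul_oscl t X Y : omul (osc t X) Y = osc t (omul X Y). Proof. oring. Qed.
Lemma omul_oscr t X Y : omul X (osc t Y) = osc t (omul X Y). Proof. oring. Qed.
Lemma omul_addl X Y Z : omul (oadd X Y) Z = oadd (omul X Z) (omul Y Z). Proof. oring. Qed.
Lemma omul_addr X Y Z : omul Z (oadd X Y) = oadd (omul Z X) (omul Z Y). Proof. oring. Qed.
Lemma omul_1l X : omul oone X = X. Proof. oring. Qed.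
Lemma omul_1r X : omul X oone = X. Proof. oring. Qed.
Lemma omul_0l X : omul ozero X = ozero. Proof. oring. Qed.
Lemma omul_0r X : omul X ozero = ozero. Proof. oring. Qed.
Lemma osc_0 t : osc t (@ozero R) = ozero. Proof. oring. Qed.
Lemma osc_osc a b X : osc a (osc b X) = osc (a * b) X. Proof. oring. Qed.
Lemma osc_add c X Y : osc c (oadd X Y) = oadd (osc c X) (osc c Y). Proof. oring. Qed.
Lemma osc1 X : osc 1 X = X. Proof. oring. Qed.
Lemma otr_add X Y : otr (oadd X Y) = otr X + otr Y. Proof. ounf; ring. Qed.
Lemma otr_osc t X : otr (osc t X) = t * otr X. Proof. ounf; ring. Qed.
Lemma otr_one : otr (@oone R) = 1 + 1. Proof. by []. Qed.
Lemma otr_zero : otr (@ozero R) = 0. Proof. ounf; ring. Qed.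
Lemma oadd_sub X Y Z : oadd X (osc (-1) Z) = oadd (oadd X (osc (-1) Y)) (oadd Y (osc (-1) Z)).
Proof. oring. Qed.
Lemma Iodiff_self X : odiff X (osc 1 X) = ozero. Proof. oring. Qed.
Lemma IB s A B C D : odiff (omul A (omul B C)) (osc (-s) (omul D C)) =
  oadd (oadd (omul A (omul B C)) (omul (omul A B) C)) (osc (-1) (omul (odiff (omul A B) (osc s D)) C)).
Proof. oring. Qed.
Lemma IA s1 s2 s U V A B D : odiff (omul U V) (osc (s1*s2*s) D) =
  oadd (omul (odiff U (osc s1 A)) V) (oadd (osc s1 (omul A (odiff V (osc s2 B))))
    (osc (s1*s2) (odiff (omul A B) (osc s D)))).
Proof. oring. Qed.
Lemma Itr s A B C : otr (omul (odiff A (osc s B)) C) = otr (omul A C) - s * otr (omul B C).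
Proof. ounf; ring. Qed.
End O2.

Section Main.
Variable F : fieldType.
Variable n : nat.
Local Notation P := {mpoly F[n * 8]}.
Local Notation Tp := (@inTplus F n).
Local Notation Tp2 := (@inTplus2 F n).
Local Notation G := (@gen F n).

Lemma Tp_opp p : Tp p -> Tp (- p).
Proof. by move=> h; rewrite -scaleN1r; apply: Tp_scale. Qed.

Lemma Tp_sub p q : Tp p -> Tp q -> Tp (p - q).
Proof. by move=> hp hq; apply: Tp_add => //; apply: Tp_opp. Qed.

Lemma Tp2_opp p : Tp2 p -> Tp2 (- p).
Proof. by move=> h; rewrite -scaleN1r; apply: Tp2_scale. Qed.

Lemma Tp2_sub p q : Tp2 p -> Tp2 q -> Tp2 (p - q).
Proof. by move=> hp hq; apply: Tp2_add => //; apply: Tp2_opp. Qed.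

Lemma Tp2_sign (e : bool) p : Tp2 p -> Tp2 ((-1) ^+ e * p).
Proof. by case: e => h; rewrite ?expr1 ?expr0 ?mulN1r ?mul1r //; apply: Tp2_opp. Qed.

Lemma Tp_mul_hom p d q : inT p -> (0 < d)%N -> p \is d.-homog -> Tp q -> Tp (p * q).
Proof.
move=> ip d0 hp; elim=> [q' e iq e0 hq||q1 q2 _ h1 _ h2|c q' _ h].
- apply: (@Tp_hom _ _ _ (d + e)); [exact: inT_mul|by rewrite addn_gt0 d0|exact: dhomogM].
- by rewrite mulr0; apply: Tp_0.
- by rewrite mulrDr; apply: Tp_add.
- by rewrite -scalerAr; apply: Tp_scale.
Qed.

Lemma Tp_mul p q : Tp p -> Tp q -> Tp (p * q).
Proof.
move=> hp hq; elim: hp => [p' d ip d0 hp'||q1 q2 _ h1 _ h2|c q' _ h].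
- exact: (Tp_mul_hom ip d0 hp' hq).
- by rewrite mul0r; apply: Tp_0.
- by rewrite mulrDl; apply: Tp_add.
- by rewrite -scalerAl; apply: Tp_scale.
Qed.

Lemma Tp2_Tp p : Tp2 p -> Tp p.
Proof.
elim=> [f g hf hg||q1 q2 _ h1 _ h2|c q' _ h].
- exact: Tp_mul.
- exact: Tp_0.
- exact: Tp_add.
- exact: Tp_scale.
Qed.

Definition ohom (d : nat) (X : oct P) : Prop :=
  [/\ oal X \is d.-homog, c1 (ou X) \is d.-homog, c2 (ou X) \is d.-homog, c3 (ou X) \is d.-homog &
      [/\ c1 (ov X) \is d.-homog, c2 (ov X) \is d.-homog, c3 (ov X) \is d.-homog & obe X \is d.-homog]].

Ltac hsolve := repeat first [ apply: rpredD | apply: rpredB | rewrite rpredN | (apply: dhomogM; assumption) | (rewrite addnC; apply: dhomogM; assumption) | assumption ].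

Lemma ohom_mul d e X Y : ohom d X -> ohom e Y -> ohom (d + e) (omul X Y).
Proof.
case=> h1 h2 h3 h4 [h5 h6 h7 h8]; case=> k1 k2 k3 k4 [k5 k6 k7 k8].
rewrite /ohom /omul /dot3 /cross3 /add3 /scale3 /opp3 /=.
split; [hsolve|hsolve|hsolve|hsolve|split; hsolve].
Qed.

Lemma crd_hom (i : 'I_n) (j : 'I_8) : @crd F n i j \is 1.-homog.
Proof. by rewrite /crd dhomogX /= mdeg1. Qed.

Lemma gen_hom i : ohom 1 (G i).
Proof. by rewrite /ohom /gen /=; split; rewrite ?crd_hom //; split; rewrite crd_hom. Qed.

Lemma weval_hom (w : word n) : ohom (wdeg w) (weval G w).
Proof.
elim: w => [i|u hu v hv] /=; first exact: gen_hom.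
by rewrite /wdeg /= size_cat; apply: ohom_mul.
Qed.

Lemma wdeg_gt0 (w : word n) : (0 < wdeg w)%N.
Proof. by elim: w => [i|u hu v hv] //=; rewrite /wdeg /= size_cat addn_gt0 hu. Qed.

Lemma Tp_trw (w : word n) : Tp (@trw F n w).
Proof.
apply: (@Tp_hom _ _ _ (wdeg w)); [exact: inT_tr|exact: wdeg_gt0|].
by case: (weval_hom w) => h1 _ _ _ [_ _ _ h8]; rewrite /trw /otr; apply: rpredD.
Qed.

Lemma Tp_nrm i : Tp (@nrm F n i).
Proof.
apply: (@Tp_hom _ _ _ 2); [exact: inT_nrm|by []|].
case: (gen_hom i) => h1 h2 h3 h4 [h5 h6 h7 h8].
rewrite /nrm /onorm /dot3 -[2%N]/(1 + 1)%N; hsolve.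
Qed.

Local Notation W w := (weval G w).

Inductive inM : oct P -> Prop :=
| M0 : inM ozero
| Mw t w : Tp t -> inM (osc t (W w))
| M1 u : Tp u -> inM (osc u oone)
| Madd X Y : inM X -> inM Y -> inM (oadd X Y).

Inductive inN : oct P -> Prop :=
| N0 : inN ozero
| Nw t w : Tp t -> inN (osc t (W w))
| N1 u : Tp2 u -> inN (osc u oone)
| Nadd X Y : inN X -> inN Y -> inN (oadd X Y).

Lemma N_M X : inN X -> inM X.
Proof.
elim=> [|t w h|u h|X1 X2 _ h1 _ h2]; [exact: M0|exact: Mw|apply: M1; exact: Tp2_Tp|exact: Madd].
Qed.

Lemma M_opp X : inM X -> inM (osc (-1) X).
Proof.
elim=> [|t w h|u h|X1 X2 _ h1 _ h2]; rewrite ?osc_0 ?osc_osc ?osc_add ?mulN1r.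
- exact: M0.
- by apply: Mw; apply: Tp_opp.
- by apply: M1; apply: Tp_opp.
- exact: Madd.
Qed.

Lemma N_opp X : inN X -> inN (osc (-1) X).
Proof.
elim=> [|t w h|u h|X1 X2 _ h1 _ h2]; rewrite ?osc_0 ?osc_osc ?osc_add ?mulN1r.
- exact: N0.
- by apply: Nw; apply: Tp_opp.
- by apply: N1; apply: Tp2_opp.
- exact: Nadd.
Qed.

Lemma M_sign (e : bool) X : inM X -> inM (osc ((-1) ^+ e) X).
Proof. by case: e => h; rewrite ?expr1 ?expr0 ?osc1 //; apply: M_opp. Qed.

Lemma N_sign (e : bool) X : inN X -> inN (osc ((-1) ^+ e) X).
Proof. by case: e => h; rewrite ?expr1 ?expr0 ?osc1 //; apply: N_opp. Qed.

Lemma K1 X w : inM X -> inN (omul X (W w)) /\ inN (omul (W w) X).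
Proof.
elim=> [|t w' h|u h|X1 X2 _ [h1 h1'] _ [h2 h2']].
- by rewrite omul_0l omul_0r; split; apply: N0.
- rewrite omul_oscl omul_oscr; split.
    by apply: (@Nw t (Mul w' w)).
  by apply: (@Nw t (Mul w w')).
- by rewrite omul_oscl omul_oscr omul_1l omul_1r; split; apply: Nw.
- by rewrite omul_addl omul_addr; split; apply: Nadd.
Qed.

Lemma K1l X w : inM X -> inN (omul X (W w)).
Proof. by move=> h; case: (K1 w h). Qed.
Lemma K1r X w : inM X -> inN (omul (W w) X).
Proof. by move=> h; case: (K1 w h). Qed.

Lemma Ntr X : inN X -> Tp2 (otr X).
Proof.
elim=> [|t w h|u h|X1 X2 _ h1 _ h2]; rewrite ?otr_zero ?otr_osc ?otr_one ?otr_add.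
- exact: Tp2_0.
- apply: Tp2_mul => //; exact: Tp_trw.
- by rewrite mulrDr mulr1; apply: Tp2_add.
- exact: Tp2_add.
Qed.

Lemma M_anti x y : inM (oadd (omul (W x) (W y)) (omul (W y) (W x))).
Proof.
rewrite I1; apply: Madd; first by apply: Madd; apply: Mw; apply: Tp_trw.
apply: M1; apply: Tp_sub; first by apply: (Tp_trw (Mul x y)).
by apply: Tp_mul; apply: Tp_trw.
Qed.

Lemma M_assoc x y z : inM (oadd (omul (W x) (omul (W y) (W z))) (omul (omul (W x) (W y)) (W z))).
Proof.
rewrite Iassoc; apply: Madd; first by apply: (M_anti x (Mul y z)).
apply: Madd; first by apply: M_opp; apply: N_M; apply: K1l; apply: M_anti.
apply: Madd; first by apply: N_M; apply: K1r; apply: M_anti.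
apply: Madd; first by apply: M_opp; apply: N_M; apply: K1l; apply: M_anti.
by apply: N_M; apply: K1r; apply: M_anti.
Qed.

End Main.

Section Main2.
Variable F : fieldType.
Variable n : nat.
Local Notation P := {mpoly F[n * 8]}.
Local Notation Tp := (@inTplus F n).
Local Notation Tp2 := (@inTplus2 F n).
Local Notation G := (@gen F n).
Local Notation W w := (weval G w).
Local Notation inM := (@inM F n).
Local Notation inN := (@inN F n).
Local Notation M_anti := (M_anti F).
Local Notation M_assoc := (M_assoc F).
Local Notation Tp_trw := (Tp_trw F).
Local Notation Tp_nrm := (Tp_nrm F).
Local Notation equivT := (@equivT F n).

Local Notation trw := (@trw F n).
Local Notation trL := (@trL F n).

Definition rext (X : oct P) (r : seq 'I_n) : oct P := foldl (fun X j => omul X (G j)) X r.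

Lemma weval_foldl (w0 : word n) r :
  W (foldl (fun w j => Mul w (Letter j)) w0 r) = rext (W w0) r.
Proof. by elim: r w0 => [|j r IH] w0 //=; rewrite IH. Qed.

Lemma weval_left x r : W (leftword x r) = rext (G x) r.
Proof. exact: weval_foldl. Qed.

Lemma rext_cons X j r : rext X (j :: r) = rext (omul X (G j)) r.
Proof. by []. Qed.

Lemma rext_cat X r1 r2 : rext X (r1 ++ r2) = rext (rext X r1) r2.
Proof. exact: foldl_cat. Qed.

Lemma rext_add X Y r : rext (oadd X Y) r = oadd (rext X r) (rext Y r).
Proof. by elim: r X Y => [|j r IH] X Y //=; rewrite omul_addl IH. Qed.

Lemma rext_N X r : inN X -> inN (rext X r).
Proof.
elim: r X => [|j r IH] X h //=; apply: IH.
exact: (K1l (Letter j) (N_M h)).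
Qed.

Lemma trL_cons x r : trL (x :: r) = otr (rext (G x) r).
Proof. by rewrite /trL /Defs.trw weval_left. Qed.

Lemma letters_left (x : 'I_n) (r : seq 'I_n) : letters (leftword x r) = x :: r.
Proof.
rewrite /leftword; elim/last_ind: r => [|r j IH] //=.
by rewrite foldl_rcons /= IH -cats1.
Qed.

Lemma swap3 p a b r : (2 < size (p ++ a :: b :: r))%N ->
  Tp2 (trL (p ++ a :: b :: r) + trL (p ++ b :: a :: r)).
Proof.
case: p => [|x p]; rewrite ?cat0s.
  case: r => [|c r] // _; rewrite !trL_cons !rext_cons -otr_add -rext_add.
  apply: Ntr; apply: rext_N; rewrite Iswap0.
  exact: (K1l (Letter c) (M_anti (Letter a) (Letter b))).
move=> _.
have E u v : p ++ u :: v :: r = (p ++ [:: u; v]) ++ r by rewrite -catA.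
rewrite !cat_cons !trL_cons !E !rext_cat -otr_add -rext_add; apply: Ntr; apply: rext_N.
rewrite !rext_cons Iswap -weval_left.
exact: (K1r (leftword x p) (M_anti (Letter a) (Letter b))).
Qed.

Definition eqs (f h : P) := exists e : bool, equivT f ((-1) ^+ e * h).

Lemma eqv_refl (f : P) : equivT f ((-1) ^+ false * f).
Proof. by rewrite /equivT expr0 mul1r subrr; apply: Tp2_0. Qed.

Lemma eqv_trans (e1 e2 : bool) (f g h : P) : equivT f ((-1) ^+ e1 * g) -> equivT g ((-1) ^+ e2 * h) ->
  equivT f ((-1) ^+ (e1 (+) e2) * h).
Proof.
rewrite /equivT => h1 h2.
have -> : f - (-1) ^+ (e1 (+) e2) * h = (f - (-1) ^+ e1 * g) + (-1) ^+ e1 * (g - (-1) ^+ e2 * h).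
  by rewrite signr_addb mulrBr addrA subrK mulrA.
by apply: Tp2_add => //; apply: Tp2_sign.
Qed.

Lemma eqv_sym (e : bool) (f h : P) : equivT f ((-1) ^+ e * h) -> equivT h ((-1) ^+ e * f).
Proof.
rewrite /equivT => h1.
have -> : h - (-1) ^+ e * f = - ((-1) ^+ e * (f - (-1) ^+ e * h)).
  by rewrite mulrBr mulrA -expr2 sqrr_sign mul1r opprB.
by apply: Tp2_opp; apply: Tp2_sign.
Qed.

Lemma eqs_refl f : eqs f f.
Proof. exists false; exact: eqv_refl. Qed.
Lemma eqs_sym f h : eqs f h -> eqs h f.
Proof. by case=> e h1; exists e; apply: eqv_sym. Qed.
Lemma eqs_trans f g h : eqs f g -> eqs g h -> eqs f h.
Proof. by case=> e1 h1 [e2 h2]; exists (e1 (+) e2); apply: eqv_trans h2. Qed.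

Lemma swap_neg p a b r : (2 < size (p ++ a :: b :: r))%N ->
  equivT (trL (p ++ a :: b :: r)) ((-1) ^+ true * trL (p ++ b :: a :: r)).
Proof. by move=> h; rewrite /equivT expr1 mulN1r opprK; apply: swap3. Qed.

Lemma eqs_swap p a b r : eqs (trL (p ++ a :: b :: r)) (trL (p ++ b :: a :: r)).
Proof.
case: p => [|x p]; last by exists true; apply: swap_neg; rewrite size_cat /= ?addnS.
case: r => [|c r]; last by exists true; apply: swap_neg; rewrite size_cat /= ?addnS.
have -> : trL ([::] ++ [:: a; b]) = trL ([::] ++ [:: b; a]).
  by rewrite !trL_cons /= Ttr_comm.
exact: eqs_refl.
Qed.

Lemma eqs_move p s1 x s2 : eqs (trL (p ++ s1 ++ x :: s2)) (trL (p ++ x :: s1 ++ s2)).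
Proof.
elim: s1 p => [|y s1 IH] p /=; first exact: eqs_refl.
have := IH (p ++ [:: y]); rewrite -!catA /= => h.
apply: eqs_trans h _; exact: eqs_swap.
Qed.

Lemma eqs_perm t : forall p s, perm_eq t s -> eqs (trL (p ++ t)) (trL (p ++ s)).
Proof.
elim: t => [|x t IH] p s.
  by rewrite perm_sym => /perm_nilP ->; apply: eqs_refl.
move=> hp; have hx : x \in s by rewrite -(perm_mem hp) mem_head.
move: hp; case/splitPr: hx => s1 s2 hp.
have ht : perm_eq t (s1 ++ s2).
  by rewrite -(perm_cons x); apply: (perm_trans hp); rewrite -cat1s perm_catCA.
have := IH (p ++ [:: x]) _ ht; rewrite -!catA /= => h.
apply: eqs_trans h _; apply: eqs_sym; exact: eqs_move.
Qed.

Lemma leftword_rcons (x : 'I_n) r c : leftword x (rcons r c) = Mul (leftword x r) (Letter c).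
Proof. by rewrite /leftword foldl_rcons. Qed.

Lemma Bp (x1 : 'I_n) r1 x2 r2 : exists x r (e : bool),
  perm_eq (x :: r) (x1 :: r1 ++ x2 :: r2) /\
  inM (odiff (omul (W (leftword x1 r1)) (W (leftword x2 r2))) (osc ((-1) ^+ e) (W (leftword x r)))).
Proof.
elim/last_ind: r2 => [|r2 c [x [r [e [hp hm]]]]].
  exists x1, (rcons r1 x2), false; split; first by rewrite cats1.
  by rewrite leftword_rcons expr0 Iodiff_self; apply: M0.
exists x, (rcons r c), (~~ e); split.
  have -> : x1 :: r1 ++ x2 :: rcons r2 c = (x1 :: r1 ++ x2 :: r2) ++ [:: c].
    by rewrite /= -catA -cats1.
  by rewrite -cats1 -cat_cons perm_cat2r.
rewrite !leftword_rcons signrN /= IB; apply: Madd.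
  exact: (M_assoc (leftword x1 r1) (leftword x2 r2) (Letter c)).
by apply: M_opp; apply: N_M; apply: (K1l (Letter c) hm).
Qed.

Lemma Alem (w : word n) : exists x r (e : bool),
  perm_eq (x :: r) (letters w) /\ inM (odiff (W w) (osc ((-1) ^+ e) (W (leftword x r)))).
Proof.
elim: w => [i|u [x1 [r1 [e1 [p1 m1]]]] v [x2 [r2 [e2 [p2 m2]]]]].
  exists i, [::], false; split => //.
  by rewrite expr0 Iodiff_self; apply: M0.
have [x [r [e [p m]]]] := Bp x1 r1 x2 r2.
exists x, r, (e1 (+) e2 (+) e); split.
  by apply: (perm_trans p); rewrite -cat_cons; apply: perm_cat.
rewrite !signr_addb.
change (W (Mul u v)) with (omul (W u) (W v)).
rewrite (IA _ _ _ _ _ (W (leftword x1 r1)) (W (leftword x2 r2))); apply: Madd; first exact: (N_M (K1l v m1)).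
apply: Madd; first exact: (M_sign e1 (N_M (K1r (leftword x1 r1) m2))).
by rewrite -osc_osc; apply: M_sign; apply: M_sign.
Qed.

Lemma step_tr (U : word n) x r (e : bool) Y :
  inM (odiff (W U) (osc ((-1) ^+ e) (W (leftword x r)))) ->
  equivT (trw (Mul U Y)) ((-1) ^+ e * trw (Mul (leftword x r) Y)).
Proof.
move=> m; rewrite /equivT /Defs.trw /= -Itr; apply: Ntr; exact: (K1l Y m).
Qed.

Lemma Blem (Y : word n) : forall x r, exists t (e : bool),
  perm_eq t (x :: r ++ letters Y) /\ equivT (trw (Mul (leftword x r) Y)) ((-1) ^+ e * trL t).
Proof.
elim: Y => [y|Y1 _ Y2 IH2] x r.
  exists (x :: rcons r y), false; split; first by rewrite -cats1.
  have -> : trL (x :: rcons r y) = trw (Mul (leftword x r) (Letter y)).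
    by rewrite /Defs.trL leftword_rcons.
  exact: eqv_refl.
have [x' [r' [e' [p' m']]]] := Alem (Mul (leftword x r) Y1).
have [t [e'' [pt et]]] := IH2 x' r'.
exists t, (e' (+) e''); split.
  apply: (perm_trans pt); rewrite -cat_cons.
  have -> : x :: r ++ letters Y1 ++ letters Y2 = ((x :: r) ++ letters Y1) ++ letters Y2.
    by rewrite /= catA.
  by rewrite perm_cat2r; apply: (perm_trans p'); rewrite /= letters_left.
apply: eqv_trans et.
have -> : trw (Mul (leftword x r) (Mul Y1 Y2)) = trw (Mul (Mul (leftword x r) Y1) Y2).
  by rewrite /Defs.trw /= Ttr_assoc.
exact: step_tr.
Qed.

Lemma Wred (w : word n) : exists t (e : bool),
  perm_eq t (letters w) /\ equivT (trw w) ((-1) ^+ e * trL t).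
Proof.
case: w => [i|u v].
  by exists [:: i], false; split => //; apply: eqv_refl.
have [x1 [r1 [e1 [p1 m1]]]] := Alem u.
have [t [e2 [pt et]]] := Blem v x1 r1.
exists t, (e1 (+) e2); split.
  by apply: (perm_trans pt); rewrite -cat_cons perm_cat2r.
apply: eqv_trans et; exact: step_tr.
Qed.

Lemma equivT_Tp2 (e : bool) (f g : P) : equivT f ((-1) ^+ e * g) -> Tp2 g -> Tp2 f.
Proof.
move=> h hg; rewrite -(subrK ((-1) ^+ e * g) f); apply: Tp2_add => //.
exact: Tp2_sign.
Qed.

Lemma dup_perm (t : seq 'I_n) : ~~ uniq t -> exists a rest, perm_eq t (a :: a :: rest).
Proof.
elim: t => [|x t IH] //=; rewrite negb_and negbK => /orP [hx|hu].
  by exists x, (rem x t); rewrite perm_cons; apply: perm_to_rem.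
have [a [rest p]] := IH hu; exists a, (x :: rest).
rewrite -(perm_cons x) in p; apply: (perm_trans p).
by rewrite -[x :: a :: a :: rest]/([:: x] ++ [:: a; a] ++ rest) perm_catCA.
Qed.

Lemma claim1 (w : word n) : ~~ multilinear w -> (2 < wdeg w)%N -> equivT (trw w) 0.
Proof.
move=> hm hd; have [t [e [pt et]]] := Wred w.
rewrite /equivT subr0; apply: (equivT_Tp2 et).
have hu : ~~ uniq t by rewrite (perm_uniq pt).
have hs : (2 < size t)%N by rewrite (perm_size pt).
have [a [rest pr]] := dup_perm hu.
have [e' h] := eqs_perm [::] pr; apply: (equivT_Tp2 h).
move: hs; rewrite (perm_size pr); case: rest {pr h} => [|c r] // _.
rewrite trL_cons !rext_cons; apply: Ntr; apply: rext_N; rewrite Idup.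
apply: Nadd.
  apply: (@Nw F n _ (Mul (Letter a) (Letter c))); exact: (Tp_trw (Letter a)).
apply: (@Nw F n _ (Letter c)); apply: Tp_opp; exact: (Tp_nrm a).
Qed.

Lemma claim2 (w : word n) s : perm_eq (letters w) s -> exists e : bool, equivT (trw w) ((-1) ^+ e * trL s).
Proof.
move=> ps; have [t [e [pt et]]] := Wred w.
have [e' h] := eqs_perm [::] (perm_trans pt ps).
by exists (e (+) e'); apply: eqv_trans et h.
Qed.

Definition Gk k (i : 'I_k -> 'I_n) := trL [seq i m | m <- enum 'I_k].

Lemma split2 (T : Type) (x0 : T) (s : seq T) j : (j.+1 < size s)%N ->
  s = take j s ++ nth x0 s j :: nth x0 s j.+1 :: drop j.+2 s.
Proof.
move=> h; rewrite -{1}(cat_take_drop j s); congr (_ ++ _).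
rewrite (drop_nth x0 (ltnW h)); congr (_ :: _); exact: drop_nth.
Qed.

Lemma adj k (i : 'I_k -> 'I_n) (j j' : 'I_k) : (3 <= k)%N -> val j' = (val j).+1 ->
  Tp2 (Gk (fun m => i (tperm j j' m)) + Gk i).
Proof.
move=> hk hj; rewrite /Gk.
have hsz : (2 < size [seq i m | m <- enum 'I_k])%N by rewrite size_map size_enum_ord.
set e := enum 'I_k in hsz *.
have hs : (j.+1 < size e)%N by rewrite size_enum_ord -hj ltn_ord.
have E : e = take j e ++ j :: j' :: drop j.+2 e.
  rewrite {1}(split2 j hs) nth_ord_enum -hj nth_ord_enum //.
have U := enum_uniq 'I_k; rewrite -/e E cat_uniq in U.
case/and3P: U => _ hn U2.
move: U2; rewrite /= !inE negb_or => /andP [/andP [hjj' hj2] /andP [hj'2 _]].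
set e1 := take j e in E hn *; set e2 := drop j.+2 e in E hj2 hj'2 *.
have D1 m : m \in e1 -> (j != m) && (j' != m).
  move=> hm; apply/andP; split; apply/eqP => em; subst m; move/negP: hn; apply; apply/hasP.
    by exists j => //; rewrite inE eqxx.
  by exists j' => //; rewrite !inE eqxx orbT.
rewrite E !map_cat /= in hsz; rewrite E !map_cat /= tpermL tpermR.
have -> : [seq i (tperm j j' m) | m <- e1] = [seq i m | m <- e1].
  apply/eq_in_map => m /D1 /andP [h1 h2]; by rewrite tpermD.
have -> : [seq i (tperm j j' m) | m <- e2] = [seq i m | m <- e2].
  apply/eq_in_map => m hm; rewrite tpermD //; apply/eqP => em; subst m.
    by rewrite hm in hj2.
  by rewrite hm in hj'2.
by apply: swap3; move: hsz; rewrite !size_cat.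
Qed.

Lemma any_tp k (i : 'I_k -> 'I_n) (x y : 'I_k) : (3 <= k)%N -> x != y ->
  Tp2 (Gk (fun m => i (tperm x y m)) + Gk i).
Proof.
move=> hk; wlog lt : x y / (val x < val y)%N.
  move=> H nxy; case: (ltngtP x y) => h; first exact: H.
    by rewrite tpermC; apply: H => //; rewrite eq_sym.
  by move: nxy; rewrite (val_inj h) eqxx.
move=> _; move: (lt); rewrite -(subnKC lt) => _.
move: (val y - (val x).+1)%N (subnKC lt) => d; move=> hy {lt}.
elim: d x y i hy => [|d IH] x y i hy.
  by apply: adj => //; rewrite -hy addn0.
have hz : ((val x).+1 + d < k)%N by apply: ltn_trans (ltn_ord y); rewrite -hy addnS ltnS.
pose z := Ordinal hz.
have hyz : val y = (val z).+1 by rewrite -hy /= addnS.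
have nzx : z != x by apply/eqP => /(congr1 val) /=; lia.
have nyx : y != x by apply/eqP => /(congr1 val); rewrite hyz /=; lia.
have key m : tperm x y m = tperm z y (tperm x z (tperm z y m)).
  have := permJ (tperm x z) (tperm z y) (tperm z y m).
  by rewrite tpermK tpermJ tpermL [tperm z y x]tpermD // => ->.
pose i1 := fun m => i (tperm z y (tperm x z m)).
have h1 := adj i1 hk hyz.
have h2 := IH x z (fun m => i (tperm z y m)) erefl.
have h3 := adj i hk hyz.
have -> : Gk (fun m => i (tperm x y m)) = Gk (fun m => i1 (tperm z y m)).
  by rewrite /Gk; congr trL; apply: eq_map => m; rewrite key.
have -> : Gk (fun m => i1 (tperm z y m)) + Gk i =
  (Gk (fun m => i1 (tperm z y m)) + Gk i1) - (Gk i1 + Gk (fun m => i (tperm z y m)))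
   + (Gk (fun m => i (tperm z y m)) + Gk i).
  by ring.
by apply: Tp2_add => //; apply: Tp2_sub.
Qed.

Lemma alg1 (A B C s : P) : A - - s * C = (A + B) - (B - s * C).
Proof. by ring. Qed.

Lemma perm_claim k (i : 'I_k -> 'I_n) (s : 'S_k) : (3 <= k)%N ->
  equivT (Gk (fun m => i (s m))) ((-1) ^+ odd_perm s * Gk i).
Proof.
move=> hk; case: (prod_tpermP s) => ts -> {s} hts.
elim: ts i hts => [|a ts IH] i /=.
  move=> _; rewrite big_nil odd_perm1.
  have -> : Gk (fun m => i ((1%g : 'S_k) m)) = Gk i.
    by rewrite /Gk; congr trL; apply: eq_map => m; rewrite perm1.
  exact: eqv_refl.
case/andP => ha hts; rewrite big_cons odd_permM odd_tperm ha signr_addb expr1 mulN1r.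
set Q := (\prod_(t <- ts) tperm t.1 t.2)%g.
have -> : Gk (fun m => i ((tperm a.1 a.2 * Q)%g m)) = Gk (fun m => (fun m' => i (Q m')) (tperm a.1 a.2 m)).
  by rewrite /Gk; congr trL; apply: eq_map => m; rewrite permM.
have h1 := any_tp (fun m' => i (Q m')) hk ha.
have h2 := IH i hts.
rewrite /equivT in h2 *.
rewrite (alg1 _ (Gk (fun m' => i (Q m')))).
exact: Tp2_sub.
Qed.

End Main2.

Unset Implicit Arguments.
Set Strict Implicit.
Theorem lemma4p2 (F : closedFieldType) (n : nat) :
  (* 1. non-multilinear words of degree > 2 *)
  (forall w : word n, ~~ multilinear w -> (2 < wdeg w)%N ->
     equivT (@trw F n w) 0)
  /\
  (* 2. multilinear words in x_{i1},...,x_{ik}, i1 < ... < ik *)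
  (forall (w : word n) (s : seq 'I_n),
     multilinear w -> sorted (fun i j : 'I_n => (i < j)%N) s ->
     perm_eq (letters w) s ->
     exists e : bool, equivT (@trw F n w) ((-1) ^+ e * @trL F n s))
  /\
  (* 3. antisymmetry of left-normed traces for k >= 3 *)
  (forall (k : nat) (i : 'I_k -> 'I_n) (sigma : 'S_k),
     (3 <= k)%N ->
     (forall a b : 'I_k, (a < b)%N -> (i a < i b)%N) ->
     equivT (@trL F n [seq i (sigma j) | j <- enum 'I_k])
            ((-1) ^+ odd_perm sigma * @trL F n [seq i j | j <- enum 'I_k])).

Proof.
split; first by move=> w hm hd; apply: claim1.
split.
  by move=> w s _ _ ps; apply: claim2.
by move=> k i sigma hk _; apply: perm_claim.
Qed.
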